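(* Let $X$ be a compact metrizable space, let $f\in\mathrm{C}(X)$ be self-adjoint, and let $\varepsilon>0$. Then there exist $n\in\mathbb N$ and self-adjoint $f_1,\dots,f_n\in\mathrm{C}(X)$ such that $\|f-f_i\|_\infty<\varepsilon$ for $i=1,\dots,n$, and $\frac1n\,|\{1\le i\le n: f_i(x)=0\}|<\varepsilon$ for all $x\in X$. *)

(* Defs.v *)
From HB Require Import structures.
From mathcomp Require Import all_boot all_order all_algebra.
From mathcomp Require Import all_classical all_reals all_analysis.
Set Implicit Arguments. Unset Strict Implicit. Unset Printing Implicit Defensive.
Import Order.TTheory GRing.Theory Num.Theory.
Import numFieldNormedType.Exports.
Local Open Scope classical_set_scope.
Local Open Scope ring_scope.

Definition supnorm (R : realType) (X : Type) (g : X -> R) : R :=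
  sup [set `|g x| | x in [set: X]].

(* Main.v *)
Require Import Defs.
From HB Require Import structures.
From mathcomp Require Import all_boot all_order all_algebra.
From mathcomp Require Import all_classical all_reals all_analysis.
Import Order.TTheory GRing.Theory Num.Theory.
Import numFieldNormedType.Exports.
Local Open Scope classical_set_scope.
Local Open Scope ring_scope.

Lemma supnorm_cst (R : realType) (X : Type) (c : R) :
  supnorm (fun _ : X => c) <= `|c|.
Proof.
rewrite /supnorm; have [[x0 _]|nX] := pselect (exists x : X, True).
  have -> : [set `|c| | x in [set: X]] = [set `|c|].
    by apply/seteqP; split => [y [x _ <-]//|y ->]; exists x0.
  by rewrite sup1.
have -> : [set `|c| | x in [set: X]] = set0.
  by apply/seteqP; split => [y [x _ _]|y //]; apply: nX; exists x.
by rewrite sup0.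
Qed.

Theorem lemma3p6 (R : realType) (X : pseudoMetricType R)
    (hX : hausdorff_space X) (cX : compact [set: X])
    (f : X -> R) (hf : continuous f) (eps : R) (heps : 0 < eps) :
  exists (n : nat) (F : 'I_n -> X -> R),
    (0 < n)%N /\
    (forall i, continuous (F i)) /\
    (forall i, supnorm (fun x => f x - F i x) < eps) /\
    (forall x : X, (#|[pred i : 'I_n | F i x == 0]|%:R / n%:R : R) < eps).
Proof.
set n := (Num.truncn (eps^-1)).+1.
have n0 : (0 < n)%N by [].
have n0R : 0 < n%:R :> R by rewrite ltr0n.
have hn : eps^-1 < n%:R := truncnS_gt _.
pose c (i : 'I_n) : R := eps * i%:R / n%:R.
exists n, (fun i x => f x + c i); split => //; split; [|split].
- move=> i x; apply: cvgD; [exact: hf | exact: cvg_cst].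
- move=> i; have -> : (fun x => f x - (f x + c i)) = (fun _ => - c i).
    by apply/funext => x; rewrite opprD addrA subrr add0r.
  apply: le_lt_trans; first exact: supnorm_cst.
  rewrite normrN /c.
  rewrite ger0_norm; last by rewrite divr_ge0 // mulr_ge0 // ltW.
  rewrite ltr_pdivrMr // ltr_pM2l // ltr_nat; exact: ltn_ord.
- move=> x.
  have hc : (#|[pred i : 'I_n | (f x + c i == 0)%R]| <= 1)%N.
    apply/card_le1_eqP => i j; rewrite !inE => /eqP hi /eqP hj.
    have : c i = c j by apply: (@GRing.addrI _ (f x)); rewrite hi hj.
    rewrite /c => /(congr1 (fun t => t * n%:R / eps)).
    rewrite !mulfVK ?gt_eqF // ![eps * _]mulrC !mulfK ?gt_eqF //.
    by move/eqP; rewrite eqr_nat => /eqP/val_inj.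
  apply: (@le_lt_trans _ _ (1 / n%:R)).
    by rewrite ler_pM2r ?invr_gt0 // lern1.
  rewrite mul1r -[X in _ < X]invrK ltf_pV2 ?posrE ?invr_gt0 //.
Qed.
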